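(* Let $n\geq2$. The group $hP\Sigma_n$ is generated by the automorphisms $\chi_{ij}$ ($1\leq i\neq j\leq n$), and its abelianization $hP\Sigma_n^{ab}$ is the free abelian group with basis the classes $\overline\chi_{ij}$.
   Context: $RF_n=\langle x_1,\dots,x_n\mid [x_i,w^{-1}x_iw]=1\ (w\in F_n)\rangle$ is the reduced free group, with $[a,b]=aba^{-1}b^{-1}$. $hP\Sigma_n$ is the subgroup of $\mathrm{Aut}(RF_n)$ of automorphisms sending each $x_i$ to a conjugate of $x_i$. $\chi_{ij}$ is the automorphism of $RF_n$ sending $x_i$ to $x_j^{-1}x_ix_j$ and fixing all $x_k$, $k\neq i$. *)

(* Defs.v *)
(* Reduced free group RF_n presented as words modulo the
   congruence generated by free cancellation and the defining relators;
   automorphisms represented by images of generators (substitutions). *)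
From mathcomp Require Import all_boot all_algebra.
Set Implicit Arguments. Unset Strict Implicit. Unset Printing Implicit Defensive.

(* letters of F_n: (i, true) = x_i, (i, false) = x_i^{-1} *)
Definition letter (n : nat) := ('I_n * bool)%type.
Definition word (n : nat) := seq (letter n).
Definition linv n (a : letter n) : letter n := (a.1, ~~ a.2).
Definition winv n (w : word n) : word n := rev (map (@linv n) w).
Definition gen n (i : 'I_n) : word n := [:: (i, true)].
Definition wcomm n (a b : word n) : word n := a ++ b ++ winv a ++ winv b.

(* equality in RF_n = <x_1..x_n | [x_i, w^{-1} x_i w] = 1 (w in F_n)> :
   the congruence on words generated by free cancellation and the relators *)
Inductive rf_eq n : word n -> word n -> Prop :=
| rf_refl w : rf_eq w w
| rf_sym u v : rf_eq u v -> rf_eq v u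
| rf_trans u v w : rf_eq u v -> rf_eq v w -> rf_eq u w
| rf_cancel u v (a : letter n) : rf_eq (u ++ a :: linv a :: v) (u ++ v)
| rf_rel u v (i : 'I_n) (w : word n) :
    rf_eq (u ++ wcomm (gen i) (winv w ++ gen i ++ w) ++ v) (u ++ v).

Definition wsubst n (s : 'I_n -> word n) (w : word n) : word n :=
  flatten (map (fun a : letter n => if a.2 then s a.1 else winv (s a.1)) w).

Definition respects n (s : 'I_n -> word n) :=
  forall u v, rf_eq u v -> rf_eq (wsubst s u) (wsubst s v).

Definition aut_id n : 'I_n -> word n := @gen n.
Definition aut_comp n (s t : 'I_n -> word n) : 'I_n -> word n :=
  fun i => wsubst s (t i).
Definition aut_eq n (s t : 'I_n -> word n) := forall i, rf_eq (s i) (t i).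
Definition aut_inverse n (s t : 'I_n -> word n) :=
  [/\ respects s, respects t, aut_eq (aut_comp s t) (@aut_id n)
    & aut_eq (aut_comp t s) (@aut_id n)].
Definition is_aut n (s : 'I_n -> word n) := exists t, aut_inverse s t.

Definition in_hPSigma n (s : 'I_n -> word n) :=
  is_aut s /\ forall i, exists w : word n, rf_eq (s i) (winv w ++ gen i ++ w).

Definition chi n (i j : 'I_n) : 'I_n -> word n :=
  fun k => if k == i then winv (gen j) ++ gen i ++ gen j else gen k.
Definition chi_inv n (i j : 'I_n) : 'I_n -> word n :=
  fun k => if k == i then gen j ++ gen i ++ winv (gen j) else gen k.

Fixpoint chi_prod n (l : seq ('I_n * 'I_n * bool)) : 'I_n -> word n :=
  match l with
  | [::] => @aut_id n
  | (i, j, b) :: l' => aut_comp (if b then chi i j else chi_inv i j) (chi_prod l')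
  end.

Definition chi_pow n (i j : 'I_n) (e : int) : 'I_n -> word n :=
  match e with
  | Posz k => iter k (aut_comp (chi i j)) (@aut_id n)
  | Negz k => iter k.+1 (aut_comp (chi_inv i j)) (@aut_id n)
  end.

Definition offdiag n : seq ('I_n * 'I_n) :=
  [seq p <- enum {: 'I_n * 'I_n} | p.1 != p.2].

(* prod_{i <> j} chi_ij ^ (e i j)  (a representative of sum e_ij chi-bar_ij) *)
Definition chi_lin n (e : 'I_n -> 'I_n -> int) : 'I_n -> word n :=
  foldr (fun p acc => aut_comp (chi_pow p.1 p.2 (e p.1 p.2)) acc) (@aut_id n) (offdiag n).

(* membership in the commutator subgroup [hPSigma_n, hPSigma_n]:
   finite products of commutators g h g^{-1} h^{-1} with g, h in hPSigma_n *)
Inductive in_comm_hP n : ('I_n -> word n) -> Prop :=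
| cs_id s : aut_eq s (@aut_id n) -> in_comm_hP s
| cs_mul s g g' h h' t :
    in_hPSigma g -> aut_inverse g g' ->
    in_hPSigma h -> aut_inverse h h' ->
    in_comm_hP t ->
    aut_eq s (aut_comp (aut_comp (aut_comp g h) (aut_comp g' h')) t) ->
    in_comm_hP s.

(* s and t have the same class in the abelianization: t^{-1} s in [G,G] *)
Definition ab_eq n (s t : 'I_n -> word n) :=
  exists t', aut_inverse t t' /\ in_comm_hP (aut_comp t' s).

(* Main.v *)
Require Import Defs.
From mathcomp Require Import all_boot all_algebra ring zify.
From Stdlib Require Import FunctionalExtensionality.
Set Implicit Arguments. Unset Strict Implicit. Unset Printing Implicit Defensive.
Set Warnings "-notation-overridden -ambiguous-paths".


Section Words.
Variable n : nat.
Implicit Types (u v w x y z c : word n) (s t : 'I_n -> word n) (a : letter n).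

Lemma linvK a : linv (linv a) = a.
Proof. by case: a => k b; rewrite /linv /= negbK. Qed.

Lemma winv_cat u v : winv (u ++ v) = winv v ++ winv u.
Proof. by rewrite /winv map_cat rev_cat. Qed.

Lemma winvK w : winv (winv w) = w.
Proof.
rewrite /winv map_rev revK -map_comp.
by rewrite (eq_map (g := id)) ?map_id // => a /=; rewrite linvK.
Qed.

Lemma winv_cons a w : winv (a :: w) = winv w ++ [:: linv a].
Proof. by rewrite /winv /= rev_cons cats1. Qed.

Lemma winv_nil : winv [::] = [::] :> word n. Proof. by []. Qed.

Definition img s a : word n := if a.2 then s a.1 else winv (s a.1).

Lemma wsubst_cons s a w : wsubst s (a :: w) = img s a ++ wsubst s w.
Proof. by []. Qed.

Lemma wsubst_cat s u v : wsubst s (u ++ v) = wsubst s u ++ wsubst s v.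
Proof. by rewrite /wsubst map_cat flatten_cat. Qed.

Lemma wsubst1 s a : wsubst s [:: a] = img s a.
Proof. by rewrite wsubst_cons cats0. Qed.

Lemma img_linv s a : img s (linv a) = winv (img s a).
Proof. by case: a => k [] //=; rewrite /img /= winvK. Qed.

Lemma wsubst_winv s w : wsubst s (winv w) = winv (wsubst s w).
Proof.
elim: w => //= a w IH.
by rewrite winv_cons wsubst_cat IH wsubst1 img_linv winv_cat.
Qed.

Lemma wsubst_comp s t w : wsubst s (wsubst t w) = wsubst (aut_comp s t) w.
Proof.
elim: w => // a w IH.
rewrite !wsubst_cons wsubst_cat IH; congr (_ ++ _).
by rewrite /img; case: ifP => _ //; rewrite wsubst_winv.
Qed.

Lemma wsubst_gen s k : wsubst s (gen k) = s k.
Proof. by rewrite wsubst1. Qed.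

Lemma wsubst_id w : wsubst (@aut_id n) w = w.
Proof. by elim: w => // -[k b] w IH; rewrite wsubst_cons IH; case: b. Qed.

Lemma aut_compA s t r : aut_comp (aut_comp s t) r = aut_comp s (aut_comp t r).
Proof. by apply: functional_extensionality => k; rewrite /aut_comp wsubst_comp. Qed.

Lemma aut_comp1 s : aut_comp s (@aut_id n) = s.
Proof. by apply: functional_extensionality => k; rewrite /aut_comp wsubst_gen. Qed.

Lemma aut_1comp s : aut_comp (@aut_id n) s = s.
Proof. by apply: functional_extensionality => k; rewrite /aut_comp wsubst_id. Qed.

Lemma rf_via v u w : rf_eq u v -> rf_eq v w -> rf_eq u w.
Proof. exact: rf_trans. Qed.

Lemma rf_cat x y u v : rf_eq u v -> rf_eq (x ++ u ++ y) (x ++ v ++ y).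
Proof.
elim=> {u v}.
- by move=> *; apply: rf_refl.
- by move=> *; apply: rf_sym.
- by move=> u v w _ H1 _ H2; apply: rf_trans H2.
- move=> u v a; have := rf_cancel (x ++ u) (v ++ y) a; rewrite -!catA; apply.
- move=> u v i w; have := rf_rel (x ++ u) (v ++ y) i w; rewrite /wcomm -!catA; apply.
Qed.

Lemma rf_catl x u v : rf_eq u v -> rf_eq (x ++ u) (x ++ v).
Proof. by move=> H; have := rf_cat x [::] H; rewrite !cats0. Qed.

Lemma rf_catr y u v : rf_eq u v -> rf_eq (u ++ y) (v ++ y).
Proof. by move=> H; have := rf_cat [::] y H. Qed.

Lemma rf_cat2 u u' v v' : rf_eq u u' -> rf_eq v v' -> rf_eq (u ++ v) (u' ++ v').
Proof. move=> H1 H2; apply: rf_trans (rf_catr _ H1) (rf_catl _ H2). Qed.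

Lemma rf_canc x y w : rf_eq (x ++ w ++ winv w ++ y) (x ++ y).
Proof.
elim: w x y => [|a w IH] x y /=; first exact: rf_refl.
rewrite winv_cons -!catA.
have -> : x ++ a :: w ++ winv w ++ linv a :: y = (x ++ [:: a]) ++ w ++ winv w ++ (linv a :: y)
  by rewrite -!catA.
apply: rf_trans (IH _ _) _; rewrite -catA /=; exact: rf_cancel.
Qed.

Lemma rf_canc' x y w : rf_eq (x ++ winv w ++ w ++ y) (x ++ y).
Proof. by have := rf_canc x y (winv w); rewrite winvK. Qed.

Lemma rf_canc0 w : rf_eq (w ++ winv w) [::].
Proof. by have := rf_canc [::] [::] w; rewrite cats0. Qed.

Lemma rf_canc0' w : rf_eq (winv w ++ w) [::].
Proof. by have := rf_canc' [::] [::] w; rewrite cats0. Qed.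

Lemma winv_ctx0 u v z : rf_eq z [::] -> rf_eq (winv (u ++ z ++ v)) (winv (u ++ v)).
Proof.
move=> HR; rewrite !winv_cat -catA; apply: rf_catl.
apply: (@rf_via (winv z ++ z ++ winv u)); last by have := rf_canc' [::] (winv u) z.
apply: rf_sym; have := rf_cat (winv z) (winv u) HR; exact.
Qed.

Lemma rf_winv u v : rf_eq u v -> rf_eq (winv u) (winv v).
Proof.
elim=> {u v}.
- by move=> *; apply: rf_refl.
- by move=> *; apply: rf_sym.
- by move=> u v w _ H1 _ H2; apply: rf_trans H2.
- move=> u v a; rewrite !winv_cat !winv_cons -!catA /=.
  rewrite linvK; exact: rf_cancel.
- move=> u v i w; apply: winv_ctx0.
  by have := rf_rel [::] [::] i w; rewrite cats0.
Qed.

Definition cj w k : word n := winv w ++ gen k ++ w.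

Lemma rf_cj u v k : rf_eq u v -> rf_eq (cj u k) (cj v k).
Proof. by move=> H; apply: rf_cat2 (rf_winv H) (rf_catl _ H). Qed.

Lemma wsubst_eq s t w : aut_eq s t -> rf_eq (wsubst s w) (wsubst t w).
Proof.
move=> H; elim: w => [|a w IH]; first exact: rf_refl.
rewrite !wsubst_cons; apply: rf_cat2 IH.
by rewrite /img; case: ifP => _; [apply: H | apply: rf_winv].
Qed.

Lemma aut_eq_refl s : aut_eq s s. Proof. by move=> k; apply: rf_refl. Qed.
Lemma aut_eq_sym s t : aut_eq s t -> aut_eq t s. Proof. by move=> H k; apply: rf_sym. Qed.
Lemma aut_eq_trans s t r : aut_eq s t -> aut_eq t r -> aut_eq s r.
Proof. by move=> H1 H2 k; apply: rf_trans (H1 k) (H2 k). Qed.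

Lemma acomp_eqr s t t' : respects s -> aut_eq t t' -> aut_eq (aut_comp s t) (aut_comp s t').
Proof. by move=> Hs H k; apply: Hs. Qed.

Lemma acomp_eql s s' t : aut_eq s s' -> aut_eq (aut_comp s t) (aut_comp s' t).
Proof. by move=> H k; apply: wsubst_eq. Qed.

Lemma respects_comp s t : respects s -> respects t -> respects (aut_comp s t).
Proof. by move=> Hs Ht u v H; rewrite -!wsubst_comp; apply/Hs/Ht. Qed.

Lemma rel0 k w : rf_eq (gen k ++ cj w k ++ winv (gen k) ++ winv (cj w k)) [::].
Proof. by have := rf_rel [::] [::] k w; rewrite cats0. Qed.

Lemma comm1_gen x Y : rf_eq (x ++ Y ++ winv x ++ winv Y) [::] -> rf_eq (x ++ Y ++ winv x) Y.
Proof.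
move=> H.
apply: (@rf_via ((x ++ Y ++ winv x ++ winv Y) ++ Y)).
  rewrite -!catA; apply: rf_sym.
  have := rf_canc' (x ++ Y ++ winv x) [::] Y; rewrite !cats0 -!catA; exact.
by have := rf_catr Y H.
Qed.

Lemma comm2_gen x Y : rf_eq (x ++ Y ++ winv x) Y -> rf_eq (winv x ++ Y ++ x) Y.
Proof.
move=> H.
apply: (@rf_via (winv x ++ (x ++ Y ++ winv x) ++ x)).
  by apply: rf_catl; apply: rf_catr; apply: rf_sym.
rewrite -!catA.
apply: (@rf_via (Y ++ winv x ++ x)).
  exact: (rf_canc' [::] (Y ++ winv x ++ x) x).
by have := rf_canc' Y [::] x; rewrite !cats0.
Qed.

Lemma comm1 k w : rf_eq (gen k ++ cj w k ++ winv (gen k)) (cj w k).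
Proof. exact: comm1_gen (rel0 k w). Qed.

Lemma comm2 k w : rf_eq (winv (gen k) ++ cj w k ++ gen k) (cj w k).
Proof. exact: comm2_gen (comm1 k w). Qed.

Definition fk k w : word n := [seq a <- w | a.1 != k].

Lemma cj_drop k w : rf_eq (cj w k) (cj (fk k w) k).
Proof.
elim/last_ind: w => [|w a IH]; first exact: rf_refl.
rewrite /fk filter_rcons -/(fk k w).
have E : forall u, cj (rcons u a) k = [:: linv a] ++ cj u k ++ [:: a].
  by move=> u; rewrite /cj -cats1 winv_cat -!catA.
case: ifP => Ha.
  by rewrite !E; apply: rf_catl; apply: rf_catr.
rewrite E; apply: (@rf_via ([:: linv a] ++ cj (fk k w) k ++ [:: a])).
  by apply: rf_catl; apply: rf_catr.
move/negbFE/eqP: Ha; clear E; case: a => k' [] /= ->.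
- exact: comm2.
- exact: comm1.
Qed.

End Words.


Section Resp.
Variable n : nat.
Implicit Types (u v w x y z c : word n) (s t : 'I_n -> word n) (a : letter n).

Lemma relimg_core (i : 'I_n) (W C : word n) :
  rf_eq (cj C i ++ (winv W ++ cj C i ++ W) ++ winv (cj C i) ++ winv (winv W ++ cj C i ++ W)) [::].
Proof.
apply: (rf_via (v:=winv C ++ wcomm (gen i) (winv (C ++ W ++ winv C) ++ gen i ++ (C ++ W ++ winv C)) ++ C)).
  apply: (rf_via (v:=(cj C i ++ (winv W ++ cj C i ++ W) ++ winv (cj C i) ++ winv (winv W ++ cj C i ++ W)) ++ winv C ++ C)).
    apply: rf_sym.
    have := rf_canc' (cj C i ++ (winv W ++ cj C i ++ W) ++ winv (cj C i) ++ winv (winv W ++ cj C i ++ W)) [::] C.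
    by rewrite !cats0.
  rewrite /wcomm /cj !winv_cat !winvK -!catA; exact: rf_refl.
apply: (rf_via (v:=winv C ++ C)); first exact: rf_rel.
exact: rf_canc0'.
Qed.

Lemma wsubst_ctx0 s u v z : rf_eq (wsubst s z) [::] ->
  rf_eq (wsubst s (u ++ z ++ v)) (wsubst s (u ++ v)).
Proof.
move=> H; rewrite !wsubst_cat; apply: rf_catl.
by have := rf_catr (wsubst s v) H.
Qed.

Lemma respects_cj s : (forall k, exists c, s k = cj c k) -> respects s.
Proof.
move=> Hs u v; elim=> {u v}.
- by move=> *; apply: rf_refl.
- by move=> *; apply: rf_sym.
- by move=> u v w _ H1 _ H2; apply: rf_trans H2.
- move=> u v a; rewrite !wsubst_cat !wsubst_cons img_linv; exact: rf_canc.
- move=> u v i w; apply: wsubst_ctx0; have [C HC] := Hs i.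
  rewrite /wcomm !wsubst_cat !wsubst_winv !wsubst_cat wsubst_gen HC.
  rewrite ?wsubst_winv;   exact: relimg_core.
Qed.

End Resp.


Section Chi.
Variable n : nat.
Implicit Types (u v w x y z c : word n) (s t : 'I_n -> word n) (a : letter n)
  (q : 'I_n * 'I_n * bool) (l : seq ('I_n * 'I_n * bool)).

Definition chiq q : 'I_n -> word n := if q.2 then chi q.1.1 q.1.2 else chi_inv q.1.1 q.1.2.
Definition flip q : 'I_n * 'I_n * bool := (q.1, ~~ q.2).
Definition invl l := rev (map flip l).
Definition offd l := all (fun p : 'I_n * 'I_n * bool => p.1.1 != p.1.2) l.

Lemma chi_prod_cons q l : chi_prod (q :: l) = aut_comp (chiq q) (chi_prod l).
Proof. by case: q => [[i j] b]. Qed.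

Lemma chi_prod1 q : chi_prod [:: q] = chiq q.
Proof. by rewrite chi_prod_cons aut_comp1. Qed.

Lemma chiq_cj q k : chiq q k =
  cj (if k == q.1.1 then (if q.2 then gen q.1.2 else winv (gen q.1.2)) else [::]) k.
Proof.
case: q => [[i j] []]; rewrite /chiq /chi /chi_inv /=; case: eqP => // ->.
all: by rewrite /cj ?winvK.
Qed.

Lemma chi_prod_cjex l k : exists c, chi_prod l k = cj c k.
Proof.
elim: l => [|q l [c Hc]]; first by exists [::].
rewrite chi_prod_cons /aut_comp Hc.
exists ((if k == q.1.1 then (if q.2 then gen q.1.2 else winv (gen q.1.2)) else [::]) ++ wsubst (chiq q) c).
rewrite /cj wsubst_cat wsubst_winv wsubst_cat wsubst_gen chiq_cj /cj.
by rewrite [in RHS]winv_cat -!catA.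
Qed.

Lemma respects_chi_prod l : respects (chi_prod l).
Proof. apply: respects_cj => k; exact: chi_prod_cjex. Qed.

Lemma respects_chiq q : respects (chiq q).
Proof. rewrite -chi_prod1; exact: respects_chi_prod. Qed.

Lemma chi_prod_cat l1 l2 : chi_prod (l1 ++ l2) = aut_comp (chi_prod l1) (chi_prod l2).
Proof.
elim: l1 => [|q l1 IH]; first by rewrite /= aut_1comp.
by rewrite cat_cons !chi_prod_cons IH aut_compA.
Qed.

Lemma chiq_flip q : q.1.1 != q.1.2 ->
  aut_eq (aut_comp (chiq q) (chiq (flip q))) (@aut_id n).
Proof.
case: q => [[i j] b] /= Hij k.
rewrite /aut_comp /chiq /flip /=.
have Hji : (j == i) = false by rewrite eq_sym; apply/negbTE.
case: b; rewrite /chi /chi_inv /=; case: (eqVneq k i) => [->|Hk].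
- rewrite /wsubst /= ?eqxx ?Hji /=.
  apply: (rf_via (v := [:: (i,true); (j,true); linv (j,true)])).
    exact: (rf_cancel [::] _ (j,true)).
  exact: (rf_cancel [:: (i,true)] [::] (j,true)).
- by rewrite /wsubst /= ?(negbTE Hk) /= ?(negbTE Hk) /=; apply: rf_refl.
- rewrite /wsubst /= ?eqxx ?Hji /=.
  apply: (rf_via (v := [:: (i,true); (j,false); linv (j,false)])).
    exact: (rf_cancel [::] _ (j,false)).
  exact: (rf_cancel [:: (i,true)] [::] (j,false)).
- by rewrite /wsubst /= ?(negbTE Hk) /= ?(negbTE Hk) /=; apply: rf_refl.
Qed.


Lemma flipK q : flip (flip q) = q.
Proof. by case: q => p b; rewrite /flip /= negbK. Qed.

Lemma invl_cons q l : invl (q :: l) = invl l ++ [:: flip q].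
Proof. by rewrite /invl /= rev_cons cats1. Qed.

Lemma invlK l : invl (invl l) = l.
Proof.
rewrite /invl map_rev revK -map_comp.
by rewrite (eq_map (g := id)) ?map_id // => q /=; rewrite flipK.
Qed.

Lemma offd_invl l : offd (invl l) = offd l.
Proof. by rewrite /offd /invl all_rev all_map. Qed.

Lemma chi_prod_inv l : offd l -> aut_eq (chi_prod (l ++ invl l)) (@aut_id n).
Proof.
elim: l => [|q l IH] /=; first by move=> _ k; apply: rf_refl.
case/andP=> Hq Hl.
rewrite invl_cons catA ?cat_cons -?/(chi_prod (q :: _)) chi_prod_cons chi_prod_cat chi_prod1.
apply: aut_eq_trans (chiq_flip Hq).
apply: acomp_eqr; first exact: respects_chiq.
have := acomp_eql (chiq (flip q)) (IH Hl); rewrite aut_1comp; exact.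
Qed.

Lemma chi_prod_inv' l : offd l -> aut_eq (chi_prod (invl l ++ l)) (@aut_id n).
Proof. by move=> H; have := chi_prod_inv (l := invl l); rewrite invlK offd_invl; apply. Qed.

Lemma aut_inv_prod l : offd l -> aut_inverse (chi_prod l) (chi_prod (invl l)).
Proof.
move=> H; split; try exact: respects_chi_prod.
- by rewrite -chi_prod_cat; apply: chi_prod_inv.
- by rewrite -chi_prod_cat; apply: chi_prod_inv'.
Qed.

Lemma hP_prod l : offd l -> in_hPSigma (chi_prod l).
Proof.
move=> H; split; first by exists (chi_prod (invl l)); apply: aut_inv_prod.
move=> k; have [c ->] := chi_prod_cjex l k; exists c; exact: rf_refl.
Qed.

Lemma hP_chi (i j : 'I_n) : i != j -> in_hPSigma (chi i j).
Proof.
move=> H; have -> : chi i j = chi_prod [:: (i, j, true)] by rewrite chi_prod1.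
by apply: hP_prod; rewrite /offd /= H.
Qed.

End Chi.


Section Gen.
Variable n : nat.
Implicit Types (u v w x y z c : word n) (s t : 'I_n -> word n) (a : letter n)
  (q : 'I_n * 'I_n * bool) (l : seq ('I_n * 'I_n * bool)).

Definition Lq (k : 'I_n) w : seq ('I_n * 'I_n * bool) := map (fun a : letter n => (k, a.1, a.2)) (fk k w).

Lemma fk_cons k a w : fk k (a :: w) = if a.1 != k then a :: fk k w else fk k w.
Proof. by []. Qed.

Lemma wsubst_chiq_fix q w : all (fun a : letter n => a.1 != q.1.1) w -> wsubst (chiq q) w = w.
Proof.
elim: w => // a w IH /andP [Ha Hw]; rewrite wsubst_cons IH //.
rewrite /img chiq_cj (negbTE Ha); by case: a Ha => k [].
Qed.

Lemma chi_prod_L k w m : chi_prod (Lq k w) m = if m == k then cj (fk k w) k else gen m.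
Proof.
elim: w => [|a w IH]; first by rewrite /=; case: (eqVneq m k) => [->|].
rewrite /Lq fk_cons; case: ifP => Ha; last exact: IH.
rewrite map_cons -/(Lq k w) chi_prod_cons /aut_comp IH.
case: (eqVneq m k) => [_|Hm].
  rewrite /cj wsubst_cat wsubst_winv wsubst_cat wsubst_gen wsubst_chiq_fix; last first.
    by apply/allP => b; rewrite mem_filter => /andP [].
  rewrite chiq_cj /= eqxx winv_cons /cj -!catA.
  by case: a Ha => k' [].
by rewrite wsubst_gen chiq_cj /= (negbTE Hm).
Qed.

Lemma offd_L k w : offd (Lq k w).
Proof.
rewrite /offd /Lq all_map; apply/allP => a; rewrite mem_filter => /andP [Ha _] /=.
by rewrite eq_sym.
Qed.

Lemma L_first k w : all (fun q => q.1.1 == k) (Lq k w).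
Proof. by rewrite /Lq all_map; apply/allP => a _ /=. Qed.

Lemma chi_prod_fix l m : all (fun q => q.1.1 != m) l -> chi_prod l m = gen m.
Proof.
elim: l => // q l IH /andP [Hq Hl].
by rewrite chi_prod_cons /aut_comp IH // wsubst_gen chiq_cj eq_sym (negbTE Hq).
Qed.

Lemma gen_aux s : in_hPSigma s -> forall ks : seq 'I_n, uniq ks ->
  exists l, [/\ offd l, all (fun q => q.1.1 \in ks) l &
    forall k, k \in ks -> rf_eq (chi_prod l k) (s k)].
Proof.
move=> hs; elim/last_ind => [|ks k IH].
  by move=> _; exists [::]; split.
rewrite rcons_uniq => /andP [Hk Hks].
have [l [H1 H2 H3]] := IH Hks.
have [c Hc] := hs.2 k.
set w := wsubst (chi_prod (invl l)) c.
have Hfix : all (fun q => q.1.1 != k) l.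
  apply/allP => q Hq; move/allP: H2 => /(_ q Hq) Hq1.
  by apply/eqP => E; rewrite -E Hq1 in Hk.
exists (l ++ Lq k w); split.
- by rewrite /offd all_cat; apply/andP; split; [exact: H1 | exact: offd_L].
- rewrite all_cat; apply/andP; split.
    by apply/allP => q Hq; rewrite mem_rcons in_cons (allP H2 q Hq) orbT.
  by apply/allP => q /(allP (L_first k w)) /eqP ->; rewrite mem_rcons in_cons eqxx.
- move=> k'; rewrite mem_rcons in_cons => /orP [/eqP ->| Hk'].
    rewrite chi_prod_cat /aut_comp chi_prod_L eqxx.
    apply: (rf_via (v := wsubst (chi_prod l) (cj w k))).
      by apply: respects_chi_prod; apply: rf_sym; apply: cj_drop.
    rewrite /cj wsubst_cat wsubst_winv wsubst_cat wsubst_gen chi_prod_fix //.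
    apply: (rf_via (v := cj c k)); last exact: rf_sym.
    apply: rf_cj.
    rewrite /w wsubst_comp -chi_prod_cat.
    have := wsubst_eq c (chi_prod_inv H1); rewrite wsubst_id; exact.
  have Hne : (k' == k) = false by apply/negbTE; apply: contraNneq Hk => <-.
  rewrite chi_prod_cat /aut_comp chi_prod_L Hne wsubst_gen.
  exact: H3.
Qed.

Lemma generation s : in_hPSigma s ->
  exists l, offd l /\ aut_eq s (chi_prod l).
Proof.
move=> hs; have [l [H1 _ H3]] := gen_aux hs (enum_uniq 'I_n).
exists l; split => // k; apply: rf_sym; apply: H3; exact: mem_enum.
Qed.

End Gen.

Import GRing.Theory.

Section Comm.
Variable n : nat.
Implicit Types (u v w x y z c : word n) (s t : 'I_n -> word n) (a : letter n)
  (q : 'I_n * 'I_n * bool) (l m : seq ('I_n * 'I_n * bool)).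

Definition net m (p : 'I_n * 'I_n) : int :=
  ((count_mem (p, true) m)%:Z - (count_mem (p, false) m)%:Z)%R.

Lemma net_cat m1 m2 p : net (m1 ++ m2) p = (net m1 p + net m2 p)%R.
Proof. rewrite /net !count_cat !PoszD; ring. Qed.

Lemma in_comm_eq s t : in_comm_hP s -> aut_eq s t -> in_comm_hP t.
Proof.
case=> [s0 H|s0 g g' h h' t0 Hg Hgi Hh Hhi Ht H] E.
  by apply: cs_id; exact: aut_eq_trans (aut_eq_sym E) H.
apply: (cs_mul Hg Hgi Hh Hhi Ht); exact: aut_eq_trans (aut_eq_sym E) H.
Qed.

Lemma drop_mid (x y z : seq ('I_n * 'I_n * bool)) : aut_eq (chi_prod y) (@aut_id n) ->
  aut_eq (chi_prod (x ++ y ++ z)) (chi_prod (x ++ z)).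
Proof.
move=> H; rewrite !chi_prod_cat; apply: acomp_eqr; first exact: respects_chi_prod.
have := acomp_eql (chi_prod z) H; rewrite aut_1comp; exact.
Qed.

Lemma comm_zero : forall m, offd m -> (forall p, net m p = 0%R) -> in_comm_hP (chi_prod m).
Proof.
move=> m; elim: {m}(size m) {-2}m (leqnn (size m)) => [|N IH] [|q r] // Hs Hoff Hnet;
  try by apply: cs_id; apply: aut_eq_refl.
move: Hoff; rewrite /offd /= => /andP [Hq Hr].
have Hin : flip q \in r.
  apply/negPn/negP => Hn; move: (Hnet q.1) Hn; rewrite /net /=.
  case: q {Hq Hnet Hs} => p [] /= Hq1 Hn; move: Hq1; rewrite (count_memPn Hn) ?xpair_eqE ?eqxx ?andbF /=; lia.
case/splitPr: Hin Hs Hr Hnet => A B Hs Hr Hnet.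
have HA : offd A by move: Hr; rewrite /offd all_cat => /andP [].
have HB : offd B by move: Hr; rewrite /offd all_cat /= => /and3P [].
have Hfq : offd [:: flip q] by rewrite /offd /= andbT.
have Hq' : offd [:: q] by rewrite /offd /= Hq.
apply: (@cs_mul n _ (chi_prod [:: q]) (chi_prod [:: flip q]) (chi_prod A) (chi_prod (invl A))
          (chi_prod (A ++ B))).
- exact: hP_prod.
- exact: (aut_inv_prod Hq').
- exact: hP_prod.
- exact: aut_inv_prod.
- apply: IH.
  + by move: Hs; rewrite /= !size_cat /=; lia.
  + by rewrite /offd all_cat; apply/andP.
  + move=> p; move: (Hnet p); rewrite !net_cat /net /=.
    case: q {Hq Hq' Hfq Hr Hs Hnet} => p' [] /=;
    rewrite !count_cat /= /flip /= ?xpair_eqE ?andbT ?andbF /=; case: (p' == p) => /=; lia.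
- change (aut_eq (chi_prod (q :: A ++ flip q :: B))
    (aut_comp (aut_comp (aut_comp (chi_prod [:: q]) (chi_prod A))
         (aut_comp (chi_prod [:: flip q]) (chi_prod (invl A)))) (chi_prod (A ++ B)))).
  rewrite -!chi_prod_cat.
  have -> : (([:: q] ++ A) ++ [:: flip q] ++ invl A) ++ A ++ B =
            (q :: A ++ [:: flip q]) ++ (invl A ++ A) ++ B by rewrite /= -!catA.
  apply: aut_eq_sym; refine (aut_eq_trans (drop_mid (q :: A ++ [:: flip q]) B (chi_prod_inv' HA)) _).
  rewrite cat_cons -catA; exact: aut_eq_refl.
Qed.

End Comm.

Import GRing.Theory.

Section Lin.
Variable n : nat.
Implicit Types (u v w x y z c : word n) (s t : 'I_n -> word n) (a : letter n)
  (q : 'I_n * 'I_n * bool) (l m : seq ('I_n * 'I_n * bool)).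

Definition powl (p : 'I_n * 'I_n) (z : int) : seq ('I_n * 'I_n * bool) :=
  match z with Posz k => nseq k (p, true) | Negz k => nseq k.+1 (p, false) end.

Definition linl (e : 'I_n -> 'I_n -> int) : seq ('I_n * 'I_n * bool) :=
  flatten [seq powl p (e p.1 p.2) | p <- offdiag n].

Lemma chi_pow_prod (i j : 'I_n) (z : int) : chi_pow i j z = chi_prod (powl (i, j) z).
Proof.
case: z => k /=.
  by elim: k => //= k ->.
elim: k => [|k IH]; first by rewrite /= aut_comp1.
by rewrite iterS IH.
Qed.

Lemma chi_lin_prod e : chi_lin e = chi_prod (linl e).
Proof.
rewrite /chi_lin /linl; elim: (offdiag n) => //= p ps ->.
by rewrite chi_prod_cat chi_pow_prod; case: p.
Qed.

Lemma mem_offdiag (p : 'I_n * 'I_n) : (p \in offdiag n) = (p.1 != p.2).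
Proof. by rewrite /offdiag mem_filter mem_enum andbT. Qed.

Lemma offd_linl e : offd (linl e).
Proof.
rewrite /linl.
have: all (fun p : 'I_n * 'I_n => p.1 != p.2) (offdiag n) by apply/allP => p; rewrite mem_offdiag.
elim: (offdiag n) => //= p ps IH /andP [Hp Hps]; rewrite /offd all_cat; apply/andP; split;
  last exact: IH.
by case: (e p.1 p.2) => k; rewrite /= all_nseq Hp orbT.
Qed.

Lemma net_powl (p' p : 'I_n * 'I_n) (z : int) : net (powl p' z) p = if p' == p then z else 0%R.
Proof.
rewrite /net; case: z => k /=; rewrite !count_nseq /= !xpair_eqE !andbT !andbF /=;
  case: (p' == p) => /=; rewrite ?mul0n ?mul1n ?subr0 //.
by rewrite sub0r NegzE.
Qed.

Lemma net_linl_aux e (ps : seq ('I_n * 'I_n)) p : uniq ps ->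
  net (flatten [seq powl p0 (e p0.1 p0.2) | p0 <- ps]) p = if p \in ps then e p.1 p.2 else 0%R.
Proof.
elim: ps => //= p0 ps IH /andP [Hp0 Hps].
rewrite net_cat IH // net_powl in_cons.
case: (eqVneq p0 p) => [<-|Hne] /=; first by rewrite (negbTE Hp0) addr0.
by rewrite ?(negbTE Hne) /= ?add0r.
Qed.

Lemma net_linl e p : net (linl e) p = if p.1 != p.2 then e p.1 p.2 else 0%R.
Proof.
rewrite /linl net_linl_aux ?mem_offdiag //.
by rewrite /offdiag filter_uniq // enum_uniq.
Qed.

Lemma net_invl m p : net (invl m) p = (- net m p)%R.
Proof.
rewrite /net /invl !count_rev !count_map.
have E : forall b, count (preim (@flip n) (pred1 (p, b))) m = count_mem (p, ~~ b) m.
  move=> b; apply: eq_count => q /=; case: q => p1 b1; rewrite /flip /= !xpair_eqE.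
  by case: b; case: b1.
rewrite (E true) (E false) /=; ring.
Qed.

Lemma net_offd m p : offd m -> p.1 == p.2 -> net m p = 0%R.
Proof.
move=> Hm /eqP Hp.
have H : forall b, (p, b) \notin m.
  move=> b; apply/negP => Hin; move/allP: Hm => /(_ _ Hin) /=; rewrite Hp eqxx //.
by rewrite /net !(count_memPn (H _)).
Qed.

Lemma part3 s : in_hPSigma s -> exists e : 'I_n -> 'I_n -> int, ab_eq s (chi_lin e).
Proof.
move=> hs; have [l [Hl Hsl]] := generation hs.
exists (fun i j => net l (i, j)).
set e := fun i j => net l (i, j).
exists (chi_prod (invl (linl e))); split.
  by rewrite chi_lin_prod; apply: aut_inv_prod; apply: offd_linl.
apply: (@in_comm_eq n (chi_prod (invl (linl e) ++ l))).
  apply: comm_zero.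
    rewrite /offd all_cat -/(offd _) -/(offd _) offd_invl; apply/andP; split; [apply: offd_linl | exact: Hl].
  move=> p; rewrite net_cat net_invl net_linl.
  case: ifP => Hp.
    by rewrite /e -surjective_pairing addNr.
  by rewrite (net_offd Hl (negbFE Hp)) oppr0 add0r.
rewrite chi_prod_cat; apply: aut_eq_sym; apply: acomp_eqr; first exact: respects_chi_prod.
exact: Hsl.
Qed.

End Lin.

Import GRing.Theory.
Section Heis.
Variable n : nat.
Local Open Scope ring_scope.

Definition grp := ('rV[int]_n * 'M[int]_n)%type.
Definition gone : grp := (0, 0).
Definition outer (u v : 'rV[int]_n) : 'M[int]_n := \matrix_(i, j) (u 0 i * v 0 j).
Definition gmul (g h : grp) : grp := (g.1 + h.1, g.2 + h.2 + outer g.1 h.1).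
Definition ginv (g : grp) : grp := (- g.1, - g.2 + outer g.1 g.1).

Lemma gext (g h : grp) : (forall j, g.1 0 j = h.1 0 j) -> (forall i j, g.2 i j = h.2 i j) -> g = h.
Proof.
case: g h => [a b] [c d] /= H1 H2; congr pair; apply/matrixP => i j //.
by rewrite (ord1 i).
Qed.

Ltac gsolve := apply: gext => /= *; rewrite ?mxE; ring.

Lemma gmulA g h k : gmul g (gmul h k) = gmul (gmul g h) k.
Proof. gsolve. Qed.
Lemma gmulg1 g : gmul g gone = g.
Proof. gsolve. Qed.
Lemma gmul1g g : gmul gone g = g.
Proof. gsolve. Qed.
Lemma gmulgV g : gmul g (ginv g) = gone.
Proof. gsolve. Qed.
Lemma gmulVg g : gmul (ginv g) g = gone.
Proof. gsolve. Qed.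
Lemma ginvK g : ginv (ginv g) = g.
Proof. gsolve. Qed.
Lemma ginvM g h : ginv (gmul g h) = gmul (ginv h) (ginv g).
Proof. gsolve. Qed.

Lemma commg_same (g h : grp) : g.1 = h.1 -> gmul g (gmul h (gmul (ginv g) (ginv h))) = gone.
Proof. case: g h => [a b] [c d] /= <-; gsolve. Qed.


Definition dl (k : 'I_n) : 'rV[int]_n := delta_mx 0 k.
Definition letv (a : letter n) : grp := if a.2 then (dl a.1, 0) else ginv (dl a.1, 0).
Definition geval (w : word n) : grp := foldr (fun a acc => gmul (letv a) acc) gone w.

Lemma geval_cons a w : geval (a :: w) = gmul (letv a) (geval w).
Proof. by []. Qed.

Lemma geval_cat u v : geval (u ++ v) = gmul (geval u) (geval v).
Proof. by elim: u => [|a u IH] /=; rewrite ?gmul1g // IH gmulA. Qed.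

Lemma letv_linv a : letv (linv a) = ginv (letv a).
Proof. by case: a => k [] //=; rewrite /letv /= ginvK. Qed.

Lemma geval_winv w : geval (winv w) = ginv (geval w).
Proof.
elim: w => [|a w IH]; first by apply: gext => /= *; rewrite ?mxE; ring.
by rewrite winv_cons geval_cat IH geval_cons geval_cons gmulg1 letv_linv ginvM.
Qed.

Lemma geval_gen k : geval (gen k) = (dl k, 0).
Proof. by rewrite /gen geval_cons gmulg1. Qed.

Lemma geval_cj c k : geval (cj c k) =
  (dl k, outer (dl k) (geval c).1 - outer (geval c).1 (dl k)).
Proof.
rewrite /cj !geval_cat geval_winv geval_gen.
case: (geval c) => a b; apply: gext => /= *; rewrite ?mxE; ring.
Qed.

Lemma commg_words (x Y : word n) : (geval x).1 = (geval Y).1 ->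
  geval (x ++ Y ++ winv x ++ winv Y) = gone.
Proof. by move=> H; rewrite !geval_cat !geval_winv commg_same. Qed.

Lemma geval_rf u v : rf_eq u v -> geval u = geval v.
Proof.
elim=> {u v} //.
- by move=> u v w _ -> _ ->.
- move=> u v a; rewrite !geval_cat !geval_cons letv_linv; congr gmul.
  by rewrite gmulA gmulgV gmul1g.
- move=> u v i w.
  have HR : geval (wcomm (gen i) (winv w ++ gen i ++ w)) = gone.
    apply: commg_words; change (winv w ++ gen i ++ w) with (cj w i).
    by rewrite geval_cj geval_gen.
  rewrite geval_cat geval_cat HR gmul1g -geval_cat; done.
Qed.

Definition Tm (D : 'I_n -> 'M[int]_n) (g : grp) : grp :=
  (g.1, g.2 + \sum_m (g.1 0 m *: D m)).

Lemma Tm_mul D g h : Tm D (gmul g h) = gmul (Tm D g) (Tm D h).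
Proof.
rewrite /Tm /=.
have -> : \sum_m ((g.1 + h.1) 0 m *: D m) = \sum_m (g.1 0 m *: D m) + \sum_m (h.1 0 m *: D m).
  by rewrite -big_split; apply: eq_bigr => m _; rewrite mxE scalerDl.
apply: gext => /= *; rewrite ?mxE; ring.
Qed.

Lemma Tm_one D : Tm D gone = gone.
Proof.
rewrite /Tm /= big1 ?addr0 // => m _; rewrite mxE scale0r //.
Qed.

Lemma Tm_inv D g : Tm D (ginv g) = ginv (Tm D g).
Proof.
have H : gmul (Tm D g) (Tm D (ginv g)) = gone by rewrite -Tm_mul gmulgV Tm_one.
by rewrite -[Tm D (ginv g)]gmul1g -(gmulVg (Tm D g)) -gmulA H gmulg1.
Qed.

Lemma Tm_dl D k X : Tm D (dl k, X) = (dl k, X + D k).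
Proof.
rewrite /Tm /=; congr (_, _ + _).
rewrite (bigD1 k) //= big1 ?addr0 => [|m Hm]; rewrite /dl mxE eqxx /=.
  by rewrite eqxx scale1r.
by rewrite (negbTE Hm) scale0r.
Qed.

Definition isTf (s : 'I_n -> word n) := forall k, (geval (s k)).1 = dl k.
Definition Dm (s : 'I_n -> word n) k := (geval (s k)).2.

Lemma geval_isT s k : isTf s -> geval (s k) = (dl k, Dm s k).
Proof. by move=> H; rewrite /Dm -(H k) -surjective_pairing. Qed.

Lemma geval_wsubst s w : isTf s -> geval (wsubst s w) = Tm (Dm s) (geval w).
Proof.
move=> Hs; elim: w => [|a w IH]; first by rewrite /= Tm_one.
rewrite wsubst_cons geval_cat IH geval_cons Tm_mul; congr gmul.
case: a => k [] /=; rewrite /img /letv /=.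
  by rewrite geval_isT // Tm_dl add0r.
by rewrite geval_winv geval_isT // Tm_inv Tm_dl add0r.
Qed.

Lemma isT_comp s t : isTf s -> isTf t ->
  isTf (aut_comp s t) /\ forall k, Dm (aut_comp s t) k = Dm t k + Dm s k.
Proof.
move=> Hs Ht.
have E : forall k, geval (aut_comp s t k) = (dl k, Dm t k + Dm s k).
  by move=> k; rewrite /aut_comp geval_wsubst // geval_isT // Tm_dl.
by split => k; rewrite /Dm ?E // -/(Dm _ k) E.
Qed.

Lemma isT_eq s t : aut_eq s t -> forall k, geval (s k) = geval (t k).
Proof. by move=> H k; apply: geval_rf. Qed.

Lemma isT_cjex s : (forall k, exists c, rf_eq (s k) (cj c k)) -> isTf s.
Proof. by move=> H k; have [c Hc] := H k; rewrite (geval_rf Hc) geval_cj. Qed.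

Lemma isT_inv g g' : isTf g -> aut_eq (aut_comp g g') (@aut_id n) ->
  isTf g' /\ forall k, Dm g' k = - Dm g k.
Proof.
move=> Hg H.
have E : forall k, Tm (Dm g) (geval (g' k)) = (dl k, 0).
  by move=> k; rewrite -geval_wsubst // -geval_gen; apply: geval_rf; apply: H.
have H1 : isTf g' by move=> k; have := E k; rewrite /Tm => -[].
split => // k; have := E k; rewrite geval_isT // Tm_dl => -[] /eqP.
by rewrite addr_eq0 => /eqP.
Qed.

Lemma comm_inv s : in_comm_hP s -> isTf s /\ forall k, Dm s k = 0.
Proof.
elim=> {s} [s H|s g g' h h' t Hg Hgi Hh Hhi _ [Ht Dt] H].
  have E : forall k, geval (s k) = (dl k, 0) by move=> k; rewrite (isT_eq H) geval_gen.
  by split => k; rewrite /Dm E.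
have Tg : isTf g by apply: isT_cjex; apply: Hg.2.
have Th : isTf h by apply: isT_cjex; apply: Hh.2.
have [Tg' Dg'] := isT_inv Tg (match Hgi with And4 _ _ H _ => H end).
have [Th' Dh'] := isT_inv Th (match Hhi with And4 _ _ H _ => H end).
have [T1 D1] := isT_comp Tg Th.
have [T2 D2] := isT_comp Tg' Th'.
have [T3 D3] := isT_comp T1 T2.
have [T4 D4] := isT_comp T3 Ht.
have E : forall k, geval (s k) = (dl k, 0).
  move=> k; rewrite (isT_eq H) geval_isT // D4 D3 D1 D2 Dg' Dh' Dt; congr pair.
  apply/matrixP => i j; rewrite !mxE; ring.
by split => k; rewrite /Dm E.
Qed.

End Heis.

Import GRing.Theory.
Section Fin.
Variable n : nat.
Local Open Scope ring_scope.
Implicit Types (l : seq ('I_n * 'I_n * bool)).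

Lemma isT_prod l : isTf (chi_prod l).
Proof. apply: isT_cjex => k; have [c ->] := chi_prod_cjex l k; exists c; exact: rf_refl. Qed.

Lemma Dm_chiq q (i j : 'I_n) : i != j -> Dm (chiq q) i i j = net [:: q] (i, j).
Proof.
move=> Hij; rewrite /Dm chiq_cj geval_cj /= !mxE /net /=.
case: q => [[x y] b] /=; rewrite !xpair_eqE /=.
have -> : (j == i) = false by rewrite eq_sym; apply/negbTE.
rewrite eqxx mulr0 subr0 mul1r.
case: (eqVneq x i) => [_|Hxi] /=; last first.
  by rewrite /= mxE.
rewrite (eq_sym y j).
case: b; rewrite ?geval_winv geval_gen /= /dl !mxE /= ?andbT ?andbF; case: (j == y) => /=; lia.
Qed.


Lemma isTf_chiq (q : 'I_n * 'I_n * bool) : isTf (chiq q).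
Proof. rewrite -chi_prod1; exact: isT_prod. Qed.

Lemma Dm_prod l (i j : 'I_n) : i != j -> Dm (chi_prod l) i i j = net l (i, j).
Proof.
move=> Hij; elim: l => [|q l IH].
  by rewrite /Dm /net /= !mxE; ring.

rewrite chi_prod_cons; have [_ Dq] := isT_comp (isTf_chiq q) (isT_prod l).
by rewrite Dq mxE IH Dm_chiq // -[q :: l]cat1s net_cat addrC.

Qed.

Lemma part4 (e : 'I_n -> 'I_n -> int) : in_comm_hP (chi_lin e) ->
  forall i j : 'I_n, i != j -> e i j = 0.
Proof.
move=> He i j Hij; have [_ D] := comm_inv He.
move: (D i); rewrite chi_lin_prod => /matrixP /(_ i j).
by rewrite Dm_prod // net_linl /= Hij mxE.
Qed.

End Fin.

Theorem corollary3p10 (n : nat) (hn : (2 <= n)%N) :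
  (* each chi_ij lies in hPSigma_n *)
  (forall i j : 'I_n, i != j -> in_hPSigma (chi i j)) /\
  (* hPSigma_n is generated by the chi_ij *)
  (forall s : 'I_n -> word n, in_hPSigma s ->
     exists l : seq ('I_n * 'I_n * bool),
       all (fun p => p.1.1 != p.1.2) l /\ aut_eq s (chi_prod l)) /\
  (* the classes chi-bar_ij span hPSigma_n^ab ... *)
  (forall s : 'I_n -> word n, in_hPSigma s ->
     exists e : 'I_n -> 'I_n -> int, ab_eq s (chi_lin e)) /\
  (* ... and are Z-linearly independent there *)
  (forall e : 'I_n -> 'I_n -> int, in_comm_hP (chi_lin e) ->
     forall i j : 'I_n, i != j -> e i j = 0%R).
Proof.
split; first exact: hP_chi.
split; first exact: generation.
split; first exact: part3.
exact: part4.
Qed.
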